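(* Let $X$ and $Y$ be metric spaces with $X$ complete, and let $Y'\subset Y$ be a subset. Let $f\colon X\to Y$ be continuous and set $X':=f^{-1}(Y')$. Assume that the restriction $f|_{X'}\colon X'\to Y'$ is open and surjective (with $X'$, $Y'$ carrying the induced metrics). Then there exists a subset $X_0\subset X'$ which is relatively closed in $X'$, such that $f|_{X_0}\colon X_0\to Y'$ is surjective and $\mathrm{dens}(X_0)=\mathrm{dens}(Y')$.
   Context: For a metric space $W$, $\mathrm{dens}(W)$ denotes the smallest cardinality of a dense subset of $W$. A map is open if it maps open sets of its domain to open sets of its target. *)

(* Defs.v *)
From Stdlib Require Import Reals.
Open Scope R_scope.

Definition subset {T : Type} (A B : T -> Prop) : Prop := forall x, A x -> B x.

Definition image {T U : Type} (f : T -> U) (A : T -> Prop) : U -> Prop :=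
  fun y => exists x, A x /\ f x = y.

Definition preimage {T U : Type} (f : T -> U) (B : U -> Prop) : T -> Prop :=
  fun x => B (f x).

Definition cauchy_seq (M : Metric_Space) (u : nat -> Base M) : Prop :=
  forall eps, eps > 0 -> exists N, forall m n, (N <= m)%nat -> (N <= n)%nat ->
    dist M (u m) (u n) < eps.

Definition converges_to (M : Metric_Space) (u : nat -> Base M) (l : Base M) : Prop :=
  forall eps, eps > 0 -> exists N, forall n, (N <= n)%nat -> dist M (u n) l < eps.

Definition complete (M : Metric_Space) : Prop :=
  forall u, cauchy_seq M u -> exists l, converges_to M u l.

Definition continuous_map (X Y : Metric_Space) (f : Base X -> Base Y) : Prop :=
  forall x eps, eps > 0 -> exists delta, delta > 0 /\
    forall x', dist X x x' < delta -> dist Y (f x) (f x') < eps.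

Definition rel_open (M : Metric_Space) (S U : Base M -> Prop) : Prop :=
  subset U S /\
  forall x, U x -> exists eps, eps > 0 /\
    forall y, S y -> dist M x y < eps -> U y.

Definition rel_closed (M : Metric_Space) (S C : Base M -> Prop) : Prop :=
  subset C S /\
  forall x, S x -> (forall eps, eps > 0 -> exists z, C z /\ dist M x z < eps) -> C x.

Definition open_restriction (X Y : Metric_Space) (f : Base X -> Base Y)
  (S : Base X -> Prop) (T : Base Y -> Prop) : Prop :=
  forall U, rel_open X S U -> rel_open Y T (image f U).

Definition surj_restriction {A B : Type} (f : A -> B) (S : A -> Prop) (T : B -> Prop) : Prop :=
  forall y, T y -> exists x, S x /\ f x = y.

Definition dense_in (M : Metric_Space) (W D : Base M -> Prop) : Prop :=
  subset D W /\
  forall w, W w -> forall eps, eps > 0 -> exists d, D d /\ dist M w d < eps.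

Definition card_le {T U : Type} (A : T -> Prop) (B : U -> Prop) : Prop :=
  exists g : {x | A x} -> {y | B y}, forall a b, g a = g b -> a = b.

(* dens(W2) <= dens(W1): every dense subset of W1 dominates in cardinality
   some dense subset of W2. *)
Definition dens_le (M1 M2 : Metric_Space) (W1 : Base M1 -> Prop) (W2 : Base M2 -> Prop) : Prop :=
  forall D1, dense_in M1 W1 D1 -> exists D2, dense_in M2 W2 D2 /\ card_le D2 D1.

Definition dens_eq (M1 M2 : Metric_Space) (W1 : Base M1 -> Prop) (W2 : Base M2 -> Prop) : Prop :=
  dens_le M1 M2 W1 W2 /\ dens_le M2 M1 W2 W1.

(* Main.v *)
Require Import Defs.
From Stdlib Require Import Reals Lra Lia List ClassicalEpsilon Classical ProofIrrelevance Cantor.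
Definition xm := Classical_Prop.classic.
Lemma fchoice {A B : Type} (R : A -> B -> Prop) :
  (forall x, exists y, R x y) -> exists f : A -> B, forall x, R x (f x).
Proof. intro H. exists (fun x => proj1_sig (constructive_indefinite_description _ (H x))).
intro x. exact (proj2_sig (constructive_indefinite_description _ (H x))). Qed.
From mathcomp Require ssreflect ssrfun ssrbool boolp classical_sets.
Module HessM.
Import ssreflect ssrfun ssrbool boolp classical_sets.
Local Open Scope nat_scope.
Local Open Scope classical_set_scope.

Section Card.
Variable T : Type.

Definition inj_on (A B : T -> Prop) := exists g : T -> T,
  (forall a, A a -> B (g a)) /\ (forall a a', A a -> A a' -> g a = g a' -> a = a').

Definition PG (A B : T -> Prop) (G : T * T -> Prop) :=
  (forall p, G p -> A (fst p) /\ B (snd p)) /\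
  (forall a b b', G (a,b) -> G (a,b') -> b = b') /\
  (forall a a' b, G (a,b) -> G (a',b) -> a = a').

Lemma comparability (A B : T -> Prop) : inj_on A B \/ inj_on B A.
Proof.
have H : forall F : set (set (T*T)), F `<=` PG A B -> total_on F subset ->
   PG A B (\bigcup_(X in F) X).
{ move=> F FP Ftot; split; [|split].
  - move=> p [X FX Xp]. by apply: (proj1 (FP X FX)).
  - move=> a b b' [X FX Xp] [Y FY Yp].
    case: (Ftot X Y FX FY) => XY.
    + exact: (proj1 (proj2 (FP Y FY)) a b b' (XY _ Xp) Yp).
    + exact: (proj1 (proj2 (FP X FX)) a b b' Xp (XY _ Yp)).
  - move=> a a' b [X FX Xp] [Y FY Yp].
    case: (Ftot X Y FX FY) => XY.
    + exact: (proj2 (proj2 (FP Y FY)) a a' b (XY _ Xp) Yp).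
    + exact: (proj2 (proj2 (FP X FX)) a a' b Xp (XY _ Yp)). }
have [G [[GAB [Gf Gi]] Gmax]] := Zorn_bigcup H.
case: (xm (forall a, A a -> exists b, G (a,b))) => HA.
{ left.
  have HA' : forall a, exists b, A a -> G (a,b).
  { move=> a. case: (xm (A a)) => Aa.
    - have [b Gb] := HA a Aa. by exists b.
    - by exists a. }
  have [g Hg] := fchoice _ HA'.
  exists g; split.
  - move=> a Aa. exact: (proj2 (GAB _ (Hg a Aa))).
  - move=> a a' Aa Aa' e. apply: (Gi a a' (g a)); first exact: Hg.
    rewrite e; exact: Hg. }
case: (xm (forall b, B b -> exists a, G (a,b))) => HB.
{ right.
  have HB' : forall b, exists a, B b -> G (a,b).
  { move=> b. case: (xm (B b)) => Bb.
    - have [a Ga] := HB b Bb. by exists a.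
    - by exists b. }
  have [g Hg] := fchoice _ HB'.
  exists g; split.
  - move=> b Bb. exact: (proj1 (GAB _ (Hg b Bb))).
  - move=> b b' Bb Bb' e. apply: (Gf (g b) b b'); first exact: Hg.
    rewrite e; exact: Hg. }
exfalso.
have [a0 Ha0] := not_all_ex_not _ _ HA.
have [Aa0 Na0] := imply_to_and _ _ Ha0.
have [b0 Hb0] := not_all_ex_not _ _ HB.
have [Bb0 Nb0] := imply_to_and _ _ Hb0.
pose G' := fun p : T * T => G p \/ p = (a0, b0).
apply: (Gmax G').
- split; first by move=> p Gp; left.
  move=> sub. apply: Na0. exists b0. apply: sub. by right.
- split; [|split].
  + move=> p [Gp| ->]; [exact: GAB|by split].
  + move=> a b b' [Gp|e] [Gq|e'].
    * exact: Gf Gp Gq.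
    * case: e' => e1 e2; subst. exfalso; apply: Na0; by exists b.
    * case: e => e1 e2; subst. exfalso; apply: Na0; by exists b'.
    * case: e => _ ->; by case: e' => _ ->.
  + move=> a a' b [Gp|e] [Gq|e'].
    * exact: Gi Gp Gq.
    * case: e' => e1 e2; subst. exfalso; apply: Nb0; by exists a.
    * case: e => e1 e2; subst. exfalso; apply: Nb0; by exists a'.
    * case: e => -> _; by case: e' => -> _.
Qed.

Variable i : nat -> T.
Hypothesis Hi : forall m n, i m = i n -> m = n.

Definition good (p : (T -> Prop) * (T * T -> T)) :=
  (forall n, fst p (i n)) /\
  (forall a b, fst p a -> fst p b -> fst p (snd p (a,b))) /\
  (forall a b c d, fst p a -> fst p b -> fst p c -> fst p d ->
     snd p (a,b) = snd p (c,d) -> a = c /\ b = d).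

Definition Str := { p | good p }.
Definition SS (s : Str) := fst (proj1_sig s).
Definition PH (s : Str) := snd (proj1_sig s).
Definition Rp (s t : Str) := (forall x, SS s x -> SS t x) /\
  (forall a b, SS s a -> SS s b -> PH t (a,b) = PH s (a,b)).

Lemma good_S (s : Str) n : SS s (i n).
Proof. exact: (proj1 (proj2_sig s)). Qed.
Lemma good_cl (s : Str) a b : SS s a -> SS s b -> SS s (PH s (a,b)).
Proof. exact: (proj1 (proj2 (proj2_sig s))). Qed.
Lemma good_inj (s : Str) a b c d : SS s a -> SS s b -> SS s c -> SS s d ->
     PH s (a,b) = PH s (c,d) -> a = c /\ b = d.
Proof. exact: (proj2 (proj2 (proj2_sig s))). Qed.

Lemma base_ex : exists s : Str, True.
Proof.
have [inv Hinv] := fchoice (fun x n => (exists m, x = i m) -> x = i n)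
  (fun x => match xm (exists m, x = i m) with
            | or_introl H => let (m, Hm) := H in ex_intro _ m (fun _ => Hm)
            | or_intror H => ex_intro _ 0 (fun H' => False_ind _ (H H')) end).
pose S0 := fun x => exists m, x = i m.
pose ph0 := fun p : T * T => i (to_nat (inv (fst p), inv (snd p))).
have g : good (S0, ph0).
{ split; [|split].
  - move=> n; by exists n.
  - move=> a b _ _ /=. by eexists.
  - move=> a b c d Ha Hb Hc Hd /= e.
    have e' := to_nat_inj _ _ (Hi _ _ e). case: e' => e1 e2.
    rewrite (Hinv a Ha) (Hinv b Hb) (Hinv c Hc) (Hinv d Hd) e1 e2. by split. }
by exists (exist _ (S0, ph0) g).
Qed.

Lemma chain_ub (A : Str -> Prop) : total_on A (fun s t => `[< Rp s t >]) ->
  exists t, forall s, A s -> `[< Rp s t >].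
Proof.
move=> Atot.
case: (xm (exists s0, A s0)) => [[s0 As0]|nA]; last first.
{ have [t _] := base_ex. exists t => s As. exfalso. apply: nA. by exists s. }
have tot : forall s t, A s -> A t -> Rp s t \/ Rp t s.
{ move=> s t As At. case: (Atot s t As At) => /asboolP H; by [left|right]. }
have [sel Hsel] := fchoice (fun (p : T * T) (s : Str) =>
   (exists s, A s /\ SS s (fst p) /\ SS s (snd p)) -> A s /\ SS s (fst p) /\ SS s (snd p))
  (fun p => match xm (exists s, A s /\ SS s (fst p) /\ SS s (snd p)) with
            | or_introl H => let (s, Hs) := H in ex_intro _ s (fun _ => Hs)
            | or_intror H => ex_intro _ s0 (fun H' => False_ind _ (H H')) end).
pose U := fun x => exists s, A s /\ SS s x.
pose phU := fun p : T * T => PH (sel p) p.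
have both : forall a b, U a -> U b -> exists s, A s /\ SS s a /\ SS s b.
{ move=> a b [s [As Sa]] [t [At Tb]].
  case: (tot s t As At) => [[st _]|[ts _]].
  - exists t; split; [done|split; [exact: st|done]].
  - exists s; split; [done|split; [done|exact: ts]]. }
have g : good (U, phU).
{ split; [|split].
  - move=> n. exists s0. split; [done|exact: good_S].
  - move=> a b Ua Ub /=. have [As [Sa Sb]] := Hsel (a,b) (both a b Ua Ub).
    exists (sel (a,b)). split; first done. exact: good_cl.
  - move=> a b c d Ua Ub Uc Ud /= e.
    have [As [Sa Sb]] := Hsel (a,b) (both a b Ua Ub).
    have [Ac [Sc Sd]] := Hsel (c,d) (both c d Uc Ud).
    rewrite /phU in e.
    case: (tot _ _ As Ac) => [[st ht]|[ts ht]].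
    + rewrite -(ht a b Sa Sb) in e. apply: (good_inj (sel (c,d))) => //; exact: st.
    + rewrite -(ht c d Sc Sd) in e. apply: (good_inj (sel (a,b))) => //; exact: ts. }
exists (exist _ (U, phU) g) => s As. apply/asboolP. split.
- move=> x Sx. by exists s.
- move=> a b Sa Sb. rewrite /PH /=. rewrite /phU.
  have Ua : U a by exists s. have Ub : U b by exists s.
  have [As' [Sa' Sb']] := Hsel (a,b) (both a b Ua Ub).
  case: (tot _ _ As As') => [[st ht]|[ts ht]].
  + exact: ht.
  + symmetry. exact: (ht a b Sa' Sb').
Qed.


Definition emi (P : Prop) {A} (x y : A) : A :=
  if excluded_middle_informative P then x else y.
Lemma emiT (P : Prop) {A} (x y : A) : P -> emi P x y = x.
Proof. rewrite /emi. by case: (excluded_middle_informative P). Qed.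
Lemma emiF (P : Prop) {A} (x y : A) : ~ P -> emi P x y = y.
Proof. rewrite /emi. by case: (excluded_middle_informative P). Qed.

Lemma no_ext (M : Str) (k : T -> T) :
  (forall a, SS M a -> ~ SS M (k a)) ->
  (forall a a', SS M a -> SS M a' -> k a = k a' -> a = a') ->
  exists M', Rp M M' /\ ~ Rp M' M.
Proof.
move=> kS kinj.
set S := SS M. set ph := PH M.
have [kinv Hkinv] := fchoice (fun y a => (exists a, S a /\ y = k a) -> S a /\ y = k a)
  (fun y => match xm (exists a, S a /\ y = k a) with
            | or_introl H => let (a, Ha) := H in ex_intro _ a (fun _ => Ha)
            | or_intror H => ex_intro _ (i 0) (fun H' => False_ind _ (H H')) end).
pose S2 := fun x => S x \/ exists a, S a /\ x = k a.
pose tag := fun x => emi (S x) 0 1.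
pose nrm := fun x => emi (S x) x (kinv x).
have nrmS : forall x, S2 x -> S (nrm x).
{ move=> x [Sx|Hx]; rewrite /nrm.
  - by rewrite emiT.
  - have [Sa e] := Hkinv x Hx. rewrite emiF //. case: Hx => a [Sa' ->]. exact: kS. }
have rec : forall x y, S2 x -> S2 y -> tag x = tag y -> nrm x = nrm y -> x = y.
{ move=> x y Hx Hy; rewrite /tag /nrm.
  case: (xm (S x)) => Sx; case: (xm (S y)) => Sy.
  - by rewrite !emiT.
  - by rewrite emiT // emiF.
  - by rewrite emiF // emiT.
  - rewrite !emiF // => _ e.
    case: Hx => [//|Hx]. case: Hy => [//|Hy].
    have [_ ex] := Hkinv x Hx. have [_ ey] := Hkinv y Hy. by rewrite ex ey e. }
have tag01 : forall x, tag x = 0 \/ tag x = 1.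
{ move=> x; rewrite /tag. case: (xm (S x)) => Sx; [rewrite emiT|rewrite emiF]; by auto. }
pose ph2 := fun p : T * T => emi (S (fst p) /\ S (snd p)) (ph p)
   (k (ph (i (tag (fst p) + 2 * tag (snd p)), ph (nrm (fst p), nrm (snd p))))).
have inner : forall a b, S2 a -> S2 b -> S (ph (i (tag a + 2 * tag b), ph (nrm a, nrm b))).
{ move=> a b Ha Hb. apply: good_cl; first exact: good_S. apply: good_cl; exact: nrmS. }
have g : good (S2, ph2).
{ split; [|split].
  - move=> n; left; exact: good_S.
  - move=> a b Ha Hb /=. rewrite /ph2 /=.
    case: (xm (S a /\ S b)) => [[Sa Sb]|nS].
    + rewrite emiT //. left. exact: good_cl.
    + rewrite emiF //. right. eexists; split; last reflexivity. exact: inner.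
  - move=> a b c d Ha Hb Hc Hd /=. rewrite /ph2 /=.
    case: (xm (S a /\ S b)) => [[Sa Sb]|nab]; case: (xm (S c /\ S d)) => [[Sc Sd]|ncd].
    + rewrite !emiT //. exact: good_inj.
    + rewrite emiT // emiF // => e. exfalso. apply: (kS _ (inner c d Hc Hd)).
      rewrite -e. exact: good_cl.
    + rewrite emiF // emiT // => e. exfalso. apply: (kS _ (inner a b Ha Hb)).
      rewrite e. exact: good_cl.
    + rewrite !emiF // => e.
      have e1 := kinj _ _ (inner a b Ha Hb) (inner c d Hc Hd) e.
      have [e2 e3] := good_inj M _ _ _ _ (good_S M _) (good_cl M _ _ (nrmS _ Ha) (nrmS _ Hb))
         (good_S M _) (good_cl M _ _ (nrmS _ Hc) (nrmS _ Hd)) e1.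
      have [e4 e5] := good_inj M _ _ _ _ (nrmS _ Ha) (nrmS _ Hb) (nrmS _ Hc) (nrmS _ Hd) e3.
      have e6 := Hi _ _ e2.
      have [t1 t2] : tag a = tag c /\ tag b = tag d.
      { move: e6. case: (tag01 a) => ->; case: (tag01 b) => ->; case: (tag01 c) => ->;
        case: (tag01 d) => -> /= H; by [split|discriminate H]. }
      split; exact: rec. }
exists (exist _ (S2, ph2) g). split.
- split.
  + move=> x Sx. by left.
  + move=> a b Sa Sb. rewrite /PH /= /ph2 /=. by rewrite emiT.
- move=> [sub _]. have : S2 (k (i 0)).
  { right. exists (i 0). split; [exact: good_S|done]. }
  move=> /sub. apply: kS. exact: good_S.
Qed.

Theorem hessenberg : exists h : T * T -> T, forall p q, h p = h q -> p = q.
Proof.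
have [t0 _] := base_ex.
have Rrefl : forall t : Str, `[< Rp t t >].
{ move=> t. apply/asboolP. split; first done. done. }
have Rtrans : forall r s t : Str, `[< Rp r s >] -> `[< Rp s t >] -> `[< Rp r t >].
{ move=> r s t /asboolP [h1 h2] /asboolP [h3 h4]. apply/asboolP. split.
  + move=> x Hx. apply: h3. exact: h1.
  + move=> a b Ha Hb. rewrite h4; [exact: h2|exact: h1|exact: h1]. }
have [M HM] := ZL_preorder t0 Rrefl Rtrans chain_ub.
set S := SS M. set ph := PH M.
case: (comparability (fun x => ~ S x) S) => [[g [gS ginj]]|[k [kS kinj]]].
+ pose e := fun x => emi (S x) (ph (i 0, x)) (ph (i 1, g x)).
  have eS : forall x, S (e x).
  { move=> x. rewrite /e. case: (xm (S x)) => Sx.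
    - rewrite emiT //. apply: good_cl => //; exact: good_S.
    - rewrite emiF //. apply: good_cl; [exact: good_S|exact: gS]. }
  have einj : forall x y, e x = e y -> x = y.
  { move=> x y. rewrite /e.
    case: (xm (S x)) => Sx; case: (xm (S y)) => Sy.
    - rewrite !emiT // => H.
      have [_ ?] := good_inj M _ _ _ _ (good_S M 0) Sx (good_S M 0) Sy H. done.
    - rewrite emiT // emiF // => H.
      have [H1 _] := good_inj M _ _ _ _ (good_S M 0) Sx (good_S M 1) (gS _ Sy) H.
      by have := Hi _ _ H1.
    - rewrite emiF // emiT // => H.
      have [H1 _] := good_inj M _ _ _ _ (good_S M 1) (gS _ Sx) (good_S M 0) Sy H.
      by have := Hi _ _ H1.
    - rewrite !emiF // => H.
      have [_ H2] := good_inj M _ _ _ _ (good_S M 1) (gS _ Sx) (good_S M 1) (gS _ Sy) H.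
      exact: ginj. }
  exists (fun p => ph (e (fst p), e (snd p))).
  move=> [x y] [x' y'] /= H.
  have [H1 H2] := good_inj M _ _ _ _ (eS x) (eS y) (eS x') (eS y') H.
  by rewrite (einj _ _ H1) (einj _ _ H2).
+ exfalso. have [M' [R1 R2]] := no_ext M k kS kinj.
  apply: R2. apply/asboolP. apply: HM. by apply/asboolP.
Qed.



End Card.

Lemma sep_exists (M : Metric_Space) (W : Base M -> Prop) (r : R) : (r > 0)%R ->
  exists S : Base M -> Prop, (forall s, S s -> W s) /\
    (forall s t, S s -> S t -> s <> t -> (dist M s t >= r)%R) /\
    (forall w, W w -> exists s, S s /\ (dist M w s < r)%R).
Proof.
move=> rpos.
pose PS := fun S : set (Base M) => (forall s, S s -> W s) /\
    (forall s t, S s -> S t -> s <> t -> (dist M s t >= r)%R).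
have H : forall F : set (set (Base M)), F `<=` PS -> total_on F subset ->
   PS (\bigcup_(X in F) X).
{ move=> F FP Ftot; split.
  - move=> s [X FX Xs]. exact: (proj1 (FP X FX)).
  - move=> s t [X FX Xs] [Y FY Yt].
    case: (Ftot X Y FX FY) => XY.
    + exact: (proj2 (FP Y FY) s t (XY _ Xs) Yt).
    + exact: (proj2 (FP X FX) s t Xs (XY _ Yt)). }
have [S [[SW Ssep] Smax]] := Zorn_bigcup H.
exists S; split; [done|split; [done|]].
move=> w Ww. apply: NNPP => nex.
have far : forall s, S s -> (dist M w s >= r)%R.
{ move=> s Ss. apply: Rnot_lt_ge => lt. apply: nex. by exists s. }
have nSw : ~ S w.
{ move=> Sw. have := far w Sw. have := proj2 (dist_refl M w w) erefl. lra. }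
apply: (Smax (fun x => S x \/ x = w)).
- split; first by move=> x Sx; left.
  move=> sub. apply: nSw. apply: sub. by right.
- split.
  + move=> s [Ss| ->]; [exact: SW|done].
  + move=> s t [Ss| ->] [St| ->] ne.
    * exact: Ssep.
    * rewrite dist_sym. exact: far.
    * exact: far.
    * by case: ne.
Qed.
End HessM.

Lemma list_code (T : Type) (i : nat -> T) (Hi : forall m n, i m = i n -> m = n) :
  exists enc : list (nat * T * nat) -> T, forall l l', enc l = enc l' -> l = l'.
Proof.
destruct (HessM.hessenberg T i Hi) as [h Hh].
pose (c := fun p : nat * T * nat => h (h (i (fst (fst p)), snd (fst p)), i (snd p))).
assert (cinj : forall p q, c p = c q -> p = q).
{ intros [[a t] b] [[a' t'] b'] E. unfold c in E; simpl in E.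
  apply Hh in E. injection E as E1 E2. apply Hh in E1. injection E1 as E3 E4.
  apply Hi in E3. apply Hi in E2. subst. reflexivity. }
pose (e' := fix e' (l : list (nat * T * nat)) : T :=
   match l with nil => i 0%nat | cons x l => h (c x, e' l) end).
exists (fun l => h (i (length l), e' l)).
intros l l' E. apply Hh in E. injection E as E1 E2. apply Hi in E1.
revert l' E1 E2. induction l as [|x l IH]; intros [|x' l'] E1 E2; try discriminate.
- reflexivity.
- simpl in E1, E2. apply Hh in E2. injection E2 as E3 E4.
  apply cinj in E3. subst. f_equal. apply IH; [congruence|exact E4].
Qed.

Open Scope R_scope.

Lemma half_pos n : 0 < (/2)^n.
Proof. apply pow_lt; lra. Qed.

Lemma half_S n : (/2)^(S n) = (/2)^n / 2.
Proof. simpl. field. Qed.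

Lemma half_small eps : eps > 0 -> exists N, (/2)^N < eps.
Proof.
intro H. destruct (pow_lt_1_zero (/2)) with (y := eps) as [N HN].
- rewrite Rabs_pos_eq; lra.
- lra.
- exists N. specialize (HN N (le_n N)). rewrite Rabs_pos_eq in HN; [lra|].
  left; apply half_pos.
Qed.

Lemma half_mono m n : (m <= n)%nat -> (/2)^n <= (/2)^m.
Proof.
induction 1; [lra|]. rewrite half_S. pose proof (half_pos m0). lra.
Qed.

Lemma dist_self (M : Metric_Space) x : dist M x x = 0.
Proof. apply dist_refl. reflexivity. Qed.

Lemma dist_nonneg (M : Metric_Space) x y : 0 <= dist M x y.
Proof. pose proof (dist_pos M x y). lra. Qed.

Lemma list_closed (M : Metric_Space) (A : Type) (h : A -> Base M) (l : list A) :
  forall C : Base M -> Prop, (forall z, C z -> exists w, In w l /\ z = h w) ->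
  forall x, (forall eps, eps > 0 -> exists z, C z /\ dist M x z < eps) -> C x.
Proof.
induction l as [|a l IH]; intros C HC x Hx.
- destruct (Hx 1) as [z [Cz _]]; [lra|]. destruct (HC z Cz) as [w [[] _]].
- destruct (classic (C x)) as [Cx|nCx]; [exact Cx|exfalso].
  pose (C' := fun z => C z /\ z <> h a).
  assert (C' x) as [Cx _].
  { apply IH.
    - intros z [Cz nz]. destruct (HC z Cz) as [w [[<-|Hw] ->]]; [congruence|].
      eauto.
    - intros eps Heps.
      destruct (classic (x = h a)) as [e|ne].
      + destruct (Hx eps Heps) as [z [Cz dz]]. exists z. split; [|exact dz].
        split; [exact Cz|]. intro e'. apply nCx. congruence.
      + assert (dpos : dist M x (h a) > 0).
        { pose proof (dist_pos M x (h a)). destruct H; [exact H|].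
          exfalso; apply ne; apply dist_refl; exact H. }
        destruct (Hx (Rmin eps (dist M x (h a)))) as [z [Cz dz]].
        { apply Rmin_pos; lra. }
        exists z. split; [split; [exact Cz|]|].
        * intro e'. subst z. pose proof (Rmin_r eps (dist M x (h a))). lra.
        * pose proof (Rmin_l eps (dist M x (h a))). lra. }
  contradiction.
Qed.


Lemma sig_eq {A : Type} (P : A -> Prop) (a b : {x | P x}) : proj1_sig a = proj1_sig b -> a = b.
Proof. destruct a, b; simpl; intros ->. f_equal. apply proof_irrelevance. Qed.

Lemma geom_bound (M : Metric_Space) (a : nat -> Base M) :
  (forall n, dist M (a n) (a (S n)) < (/2)^n) ->
  forall n k, dist M (a n) (a (n + k)%nat) <= 2 * (/2)^n - 2 * (/2)^(n+k).
Proof.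
intros H n k. induction k.
- rewrite Nat.add_0_r, dist_self. lra.
- rewrite Nat.add_succ_r. rewrite half_S.
  pose proof (dist_tri M (a n) (a (S (n+k))) (a (n+k)%nat)). specialize (H (n+k)%nat). lra.
Qed.

Lemma geom_cauchy (M : Metric_Space) (a : nat -> Base M) :
  (forall n, dist M (a n) (a (S n)) < (/2)^n) -> cauchy_seq M a.
Proof.
intros H eps Heps. destruct (half_small (eps/4)) as [N HN]; [lra|].
exists N. intros m n Hm Hn.
assert (B : forall p, (N <= p)%nat -> dist M (a N) (a p) <= 2 * (/2)^N).
{ intros p Hp. replace p with (N + (p - N))%nat by lia.
  pose proof (geom_bound M a H N (p - N)). pose proof (half_pos (N + (p-N))). lra. }
pose proof (dist_tri M (a m) (a n) (a N)). rewrite (dist_sym M (a m) (a N)) in H0.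
pose proof (B m Hm). pose proof (B n Hn). lra.
Qed.


Section Constr.
Variables (X Y : Metric_Space) (Y' : Base Y -> Prop) (f : Base X -> Base Y).
Hypothesis Hf : continuous_map X Y f.
Hypothesis Ho : open_restriction X Y f (preimage f Y') Y'.
Hypothesis Hs : surj_restriction f (preimage f Y') Y'.
Hypothesis Hc : complete X.
Variable x0 : Base X.
Variable D' : Base Y -> Prop.
Hypothesis HD' : dense_in Y Y' D'.

Definition PP := preimage f Y'.

Definition Vset z n := image f (fun w => PP w /\ dist X z w < (/2)^n).

Lemma Vopen z n : rel_open Y Y' (Vset z n).
Proof.
apply Ho. split.
- intros w [Pw _]; exact Pw.
- intros w [Pw dw]. exists ((/2)^n - dist X z w). split; [lra|].
  intros y Py dy. split; [exact Py|]. pose proof (dist_tri X z y w). lra.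
Qed.

Lemma V_self z n : PP z -> Vset z n (f z).
Proof.
intro Pz. exists z. split; [|reflexivity]. split; [exact Pz|].
rewrite dist_self. apply half_pos.
Qed.

Definition E := (Base Y * nat)%type.
Definition selP (Z : Base X -> Prop) m d k z :=
  Z z /\ forall y, Y' y -> dist Y d y < (/2)^k -> Vset z m y.
Definition sel Z m d k := epsilon (inhabits x0) (selP Z m d k).

Lemma lindelof Z m y : (exists z, Z z /\ Vset z m y) ->
  exists d k, D' d /\ Z (sel Z m d k) /\ Vset (sel Z m d k) m y.
Proof.
intros [z [Zz Vz]]. destruct (Vopen z m) as [Vsub Vop].
destruct (Vop y Vz) as [eps [epos Heps]].
destruct (half_small (eps/2)) as [k Hk]; [lra|].
destruct HD' as [_ Dd]. assert (Yy : Y' y) by (apply Vsub; exact Vz).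
destruct (Dd y Yy ((/2)^k)) as [d [Dd' dyd]]; [apply half_pos|].
exists d, k.
assert (H : selP Z m d k (sel Z m d k)).
{ unfold sel. apply epsilon_spec. exists z. split; [exact Zz|]. intros y' Yy' dy'.
  apply Heps; [exact Yy'|]. pose proof (dist_tri Y y y' d). lra. }
destruct H as [HZ HV]. split; [exact Dd'|]. split; [exact HZ|].
apply HV; [exact Yy|]. rewrite dist_sym; exact dyd.
Qed.

Fixpoint node (p : list E) : Base X :=
  match p with
  | nil => x0
  | e :: p' => sel (match p' with
                    | nil => PP
                    | _ :: p'' => fun z => PP z /\ dist X (node p') z < (/2)^(length p'')
                    end) (length p') (fst e) (snd e)
  end.

Definition goodp y q := q <> nil /\ Forall (fun e : E => D' (fst e)) q /\
  PP (node q) /\ Vset (node q) (pred (length q)) y.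

Lemma start y : Y' y -> exists e, goodp y (e :: nil).
Proof.
intro Yy. destruct (Hs y Yy) as [x [Px fx]].
destruct (lindelof PP 0 y) as [d [k [Dd [HZ HV]]]].
{ exists x. split; [exact Px|]. rewrite <- fx. apply V_self. exact Px. }
exists (d, k). split; [discriminate|]. split; [constructor; [exact Dd|constructor]|].
split; [exact HZ|exact HV].
Qed.

Lemma step y q : goodp y q -> exists e, goodp y (e :: q) /\
   dist X (node q) (node (e :: q)) < (/2)^(pred (length q)).
Proof.
intros [nq [Fq [Pq Vq]]]. destruct q as [|e0 q']; [congruence|].
simpl in Vq. destruct Vq as [w [[Pw dw] fw]].
destruct (lindelof (fun z => PP z /\ dist X (node (e0 :: q')) z < (/2)^(length q'))
   (length (e0 :: q')) y) as [d [k [Dd [HZ HV]]]].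
{ exists w. split; [split; assumption|]. rewrite <- fw. apply V_self. exact Pw. }
exists (d, k). destruct HZ as [HZ1 HZ2].
split; [|exact HZ2].
split; [discriminate|]. split; [constructor; [exact Dd|exact Fq]|].
split; [exact HZ1|exact HV].
Qed.

Lemma descent y : Y' y -> exists a : nat -> Base X,
  (forall n, PP (a n) /\ exists q, Forall (fun e : E => D' (fst e)) q /\ node q = a n) /\
  (forall n, dist X (a n) (a (S n)) < (/2)^n) /\
  (forall n, Vset (a n) n y).
Proof.
intro Yy. destruct (start y Yy) as [e0 He0].
destruct (fchoice (fun q e => goodp y q -> goodp y (e :: q) /\
   dist X (node q) (node (e :: q)) < (/2)^(pred (length q)))) as [nx Hnx].
{ intro q. destruct (classic (goodp y q)) as [g|ng].
  - destruct (step y q g) as [e He]. exists e. intros _. exact He.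
  - exists e0. intro g; contradiction. }
pose (s := fix s n := match n with O => e0 :: nil | S n => nx (s n) :: s n end).
assert (Hs' : forall n, goodp y (s n) /\ length (s n) = S n).
{ induction n as [|n [IH1 IH2]].
  - split; [exact He0|reflexivity].
  - split.
    + apply (Hnx (s n) IH1).
    + simpl. rewrite IH2. reflexivity. }
exists (fun n => node (s n)). split; [|split].
- intro n. destruct (Hs' n) as [[_ [F [Pn _]]] _]. split; [exact Pn|].
  exists (s n). split; [exact F|reflexivity].
- intro n. destruct (Hs' n) as [g L]. destruct (Hnx (s n) g) as [_ D].
  rewrite L in D. exact D.
- intro n. destruct (Hs' n) as [[_ [_ [_ V]]] L]. rewrite L in V. exact V.
Qed.

Definition D2 x := PP x /\ exists q, Forall (fun e : E => D' (fst e)) q /\ node q = x.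
Definition X0 x := PP x /\ forall eps, eps > 0 -> exists z, D2 z /\ dist X x z < eps.

Lemma X0_surj : surj_restriction f X0 Y'.
Proof.
intros y Yy. destruct (descent y Yy) as [a [HA [HB HV]]].
destruct (Hc a (geom_cauchy X a HB)) as [l Hl].
assert (fl : f l = y).
{ apply NNPP. intro ne.
  assert (dpos : dist Y (f l) y > 0).
  { pose proof (dist_pos Y (f l) y). destruct H; [exact H|].
    exfalso; apply ne; apply dist_refl; exact H. }
  destruct (Hf l (dist Y (f l) y) dpos) as [del [delpos Hdel]].
  destruct (Hl (del/2)) as [N1 HN1]; [lra|].
  destruct (half_small (del/2)) as [N2 HN2]; [lra|].
  pose (n := Nat.max N1 N2).
  destruct (HV n) as [w [[Pw dw] fw]].
  assert (dlw : dist X l w < del).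
  { pose proof (dist_tri X l w (a n)). specialize (HN1 n (Nat.le_max_l _ _)).
    rewrite dist_sym in HN1. pose proof (half_mono N2 n (Nat.le_max_r _ _)). lra. }
  specialize (Hdel w dlw). rewrite fw in Hdel. lra. }
exists l. split; [|exact fl]. split.
- unfold PP, preimage. rewrite fl. exact Yy.
- intros eps Heps. destruct (Hl eps Heps) as [N HN]. exists (a N).
  destruct (HA N) as [PN [q [F Nq]]]. split.
  + split; [exact PN|]. exists q. split; assumption.
  + rewrite dist_sym. apply HN. lia.
Qed.

Lemma X0_closed : rel_closed X PP X0.
Proof.
split.
- intros x [Px _]; exact Px.
- intros x Px Hx. split; [exact Px|]. intros eps Heps.
  destruct (Hx (eps/2)) as [z [[_ Hz] dz]]; [lra|].
  destruct (Hz (eps/2)) as [w [Dw dw]]; [lra|].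
  exists w. split; [exact Dw|]. pose proof (dist_tri X x w z). lra.
Qed.

Lemma D2_dense : dense_in X X0 D2.
Proof.
split.
- intros x Dx. split; [exact (proj1 Dx)|]. intros eps Heps. exists x.
  split; [exact Dx|]. rewrite dist_self. lra.
- intros w [_ Hw]. exact Hw.
Qed.

Lemma map_inj_forall {A B : Type} (Q : A -> Prop) (c : A -> B) :
  (forall a b, Q a -> Q b -> c a = c b -> a = b) ->
  forall l l', Forall Q l -> Forall Q l' -> map c l = map c l' -> l = l'.
Proof.
intros Hc' l. induction l as [|a l IH]; intros [|b l'] F F' Ee; try discriminate.
- reflexivity.
- inversion F; inversion F'; subst. simpl in Ee. injection Ee as E1 E2.
  f_equal; [apply Hc'; assumption|apply IH; assumption].
Qed.

Lemma D2_card (T : Type) (iota : Base Y -> nat * T)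
  (Hiota : forall d d', D' d -> D' d' -> iota d = iota d' -> d = d')
  (enc : list (nat * T * nat) -> T) (Henc : forall l l', enc l = enc l' -> l = l') :
  exists g : {x | D2 x} -> T, forall a b, g a = g b -> a = b.
Proof.
destruct (fchoice (fun (s : {x | D2 x}) q =>
   Forall (fun e : E => D' (fst e)) q /\ node q = proj1_sig s)) as [pc Hpc].
{ intros [x [Px H]]. simpl. exact H. }
pose (code := fun e : E => (fst (iota (fst e)), snd (iota (fst e)), snd e)).
exists (fun s => enc (map code (pc s))).
intros a b Ee. apply Henc in Ee.
apply (map_inj_forall (fun e : E => D' (fst e)) code) in Ee.
- apply sig_eq. rewrite <- (proj2 (Hpc a)), <- (proj2 (Hpc b)), Ee. reflexivity.
- intros [d k] [d' k'] Dd Dd' Ec. unfold code in Ec; simpl in *.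
  injection Ec as E1 E2 E3.
  assert (iota d = iota d') by (destruct (iota d), (iota d'); simpl in *; congruence).
  rewrite (Hiota d d' Dd Dd' H), E3. reflexivity.
- exact (proj1 (Hpc a)).
- exact (proj1 (Hpc b)).
Qed.

End Constr.


Lemma dens_fwd (X Y : Metric_Space) (Y' : Base Y -> Prop) (f : Base X -> Base Y)
  (X0 : Base X -> Prop) : continuous_map X Y f -> (forall x, X0 x -> Y' (f x)) ->
  surj_restriction f X0 Y' -> dens_le X Y X0 Y'.
Proof.
intros Hf HX Hs D1 [D1sub D1d]. exists (image f D1). split.
- split.
  + intros y [d [Dd <-]]. apply HX, D1sub, Dd.
  + intros w Yw eps Heps. destruct (Hs w Yw) as [x [Xx <-]].
    destruct (Hf x eps Heps) as [del [delpos Hdel]].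
    destruct (D1d x Xx del delpos) as [d [Dd dd]].
    exists (f d). split; [exists d; split; [exact Dd|reflexivity]|]. apply Hdel, dd.
- destruct (fchoice (fun (s : {y | image f D1 y}) (t : {x | D1 x}) =>
     f (proj1_sig t) = proj1_sig s)) as [g Hg].
  { intros [y [d [Dd fd]]]. exists (exist _ d Dd). simpl. exact fd. }
  exists g. intros a b E. apply sig_eq. rewrite <- (Hg a), <- (Hg b), E. reflexivity.
Qed.

Lemma inf_dense (M : Metric_Space) (W : Base M -> Prop) :
  ~ (exists l, forall y, W y -> In y l) ->
  forall D1, dense_in M W D1 ->
  exists i : nat -> {y | D1 y}, forall m n, i m = i n -> m = n.
Proof.
intros nfin D1 [D1sub D1d].
assert (Hl : forall l, exists y, D1 y /\ ~ In y l).
{ intro l. apply NNPP. intro ne. apply nfin. exists l. intros y Wy.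
  assert (D1 y).
  { apply (list_closed M (Base M) (fun z => z) l D1).
    - intros z Dz. exists z. split; [|reflexivity]. apply NNPP. intro nz.
      apply ne. exists z. split; assumption.
    - intros eps Heps. apply (D1d y Wy eps Heps). }
  apply NNPP. intro nz. apply ne. exists y. split; assumption. }
destruct (fchoice (fun l y => D1 y /\ ~ In y l) Hl) as [g Hg].
pose (pref := fix pref n := match n with O => nil | S n => g (pref n) :: pref n end).
assert (Hin : forall m n, (m < n)%nat -> In (g (pref m)) (pref n)).
{ intros m n. induction n; intro H; [lia|].
  simpl. destruct (Nat.eq_dec m n) as [->|ne]; [left; reflexivity|].
  right. apply IHn. lia. }
exists (fun n => exist _ (g (pref n)) (proj1 (Hg (pref n)))).
intros m n E. apply (f_equal (@proj1_sig _ _)) in E. simpl in E.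
destruct (Nat.lt_total m n) as [lt|[eq|gt]]; [|exact eq|].
- exfalso. apply (proj2 (Hg (pref n))). rewrite <- E. apply Hin, lt.
- exfalso. apply (proj2 (Hg (pref m))). rewrite E. apply Hin, gt.
Qed.

Lemma sig_list {A : Type} (W : A -> Prop) (l : list A) :
  exists l' : list {y | W y}, forall y, W y -> In y l -> exists w, In w l' /\ y = proj1_sig w.
Proof.
induction l as [|a l [l' IH]].
- exists nil. intros y _ [].
- destruct (classic (W a)) as [Wa|nWa].
  + exists (exist _ a Wa :: l'). intros y Wy [e|Hy].
    * exists (exist _ a Wa). split; [left; reflexivity|simpl; symmetry; exact e].
    * destruct (IH y Wy Hy) as [w [Hw ->]]. exists w. split; [right; exact Hw|reflexivity].
  + exists l'. intros y Wy [<-|Hy]; [contradiction|]. apply IH; assumption.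
Qed.

Lemma sep_dense (M : Metric_Space) (W : Base M -> Prop) :
  exists D', dense_in M W D' /\ forall D1, dense_in M W D1 -> forall t0 : {y | D1 y},
    exists iota : Base M -> nat * {y | D1 y},
      forall d d', D' d -> D' d' -> iota d = iota d' -> d = d'.
Proof.
destruct (fchoice (fun (m : nat) (S : Base M -> Prop) => (forall s, S s -> W s) /\
    (forall s t, S s -> S t -> s <> t -> dist M s t >= (/2)^m) /\
    (forall w, W w -> exists s, S s /\ dist M w s < (/2)^m))) as [Sm HS].
{ intro m. apply HessM.sep_exists. apply half_pos. }
exists (fun y => exists m, Sm m y). split.
- split.
  + intros s [m Hs]. exact (proj1 (HS m) s Hs).
  + intros w Ww eps Heps. destruct (half_small eps Heps) as [m Hm].
    destruct (proj2 (proj2 (HS m)) w Ww) as [s [Ss ds]].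
    exists s. split; [exists m; exact Ss|lra].
- intros D1 [D1sub D1d] t0.
  destruct (fchoice (fun (d : Base M) (p : nat * {y | D1 y}) =>
     (exists m, Sm m d) -> Sm (fst p) d /\ dist M d (proj1_sig (snd p)) < (/2)^(fst p) / 2))
    as [iota Hiota].
  { intro d. destruct (classic (exists m, Sm m d)) as [[m Hm]|nm].
    - assert (Wd : W d) by exact (proj1 (HS m) d Hm).
      destruct (D1d d Wd ((/2)^m/2)) as [t [Dt dt]].
      { pose proof (half_pos m). lra. }
      exists (m, exist _ t Dt). intros _. simpl. split; assumption.
    - exists (0%nat, t0). intro H; contradiction. }
  exists iota. intros d d' Dd Dd' E.
  destruct (Hiota d Dd) as [S1 d1]. destruct (Hiota d' Dd') as [S2 d2].
  rewrite E in S1, d1. apply NNPP. intro ne.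
  pose proof (proj1 (proj2 (HS _)) d d' S1 S2 ne).
  pose proof (dist_tri M d d' (proj1_sig (snd (iota d')))).
  rewrite (dist_sym M (proj1_sig (snd (iota d'))) d') in H0. lra.
Qed.

Theorem theorem2p1 (X Y : Metric_Space) (Y' : Base Y -> Prop) (f : Base X -> Base Y) :
  complete X ->
  continuous_map X Y f ->
  open_restriction X Y f (preimage f Y') Y' ->
  surj_restriction f (preimage f Y') Y' ->
  exists X0 : Base X -> Prop,
    rel_closed X (preimage f Y') X0 /\
    surj_restriction f X0 Y' /\
    dens_eq X Y X0 Y'.
Proof.
intros Hc Hf Ho Hs.
destruct (classic (exists l, forall y, Y' y -> In y l)) as [[l fin]|inf].
-
  destruct (sig_list Y' l) as [l' Hl'].
  destruct (fchoice (fun (y : {y | Y' y}) x => preimage f Y' x /\ f x = proj1_sig y))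
    as [g Hg].
  { intros [y Yy]. simpl. exact (Hs y Yy). }
  pose (X0 := fun x => exists y, x = g y).
  assert (X0P : forall x, X0 x -> Y' (f x)).
  { intros x [y ->]. exact (proj1 (Hg y)). }
  assert (X0s : surj_restriction f X0 Y').
  { intros y Yy. exists (g (exist _ y Yy)). split; [eexists; reflexivity|].
    exact (proj2 (Hg _)). }
  exists X0. split; [|split; [exact X0s|split]].
  + split; [exact X0P|]. intros x Px Hx.
    apply (list_closed X {y | Y' y} g l' X0); [|exact Hx].
    intros z [y ->]. destruct (Hl' (proj1_sig y) (proj2_sig y) (fin _ (proj2_sig y)))
      as [w [Hw E]]. exists w. split; [exact Hw|]. f_equal. apply sig_eq. exact E.
  + apply (dens_fwd X Y Y' f); assumption.
  + intros D1 [D1sub D1d].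
    assert (YD : forall y, Y' y -> D1 y).
    { intros y Yy. apply (list_closed Y {y | Y' y} (@proj1_sig _ _) l' D1).
      - intros z Dz. apply Hl'; [apply D1sub, Dz|apply fin, D1sub, Dz].
      - apply D1d, Yy. }
    exists X0. split.
    * split; [intros x Hx; exact Hx|]. intros w Xw eps Heps. exists w.
      split; [exact Xw|]. rewrite dist_self. lra.
    * exists (fun s => exist _ (f (proj1_sig s)) (YD _ (X0P _ (proj2_sig s)))).
      intros [a [ya ->]] [b [yb ->]] E. apply (f_equal (@proj1_sig _ _)) in E.
      simpl in E. rewrite (proj2 (Hg ya)), (proj2 (Hg yb)) in E.
      apply sig_eq. simpl. f_equal. apply sig_eq. exact E.
-
  assert (ne : exists y0, Y' y0).
  { apply NNPP. intro ne. apply inf. exists nil. intros y Yy. apply ne. exists y; exact Yy. }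
  destruct ne as [y0 Yy0]. destruct (Hs y0 Yy0) as [x0 _].
  destruct (sep_dense Y Y') as [D' [HD' Hiota]].
  exists (X0 X Y Y' f x0 D'). split; [|split; [|split]].
  + exact (X0_closed X Y Y' f x0 D').
  + exact (X0_surj X Y Y' f Hf Ho Hs Hc x0 D' HD').
  + apply (dens_fwd X Y Y' f); [exact Hf| |exact (X0_surj X Y Y' f Hf Ho Hs Hc x0 D' HD')].
    intros x [Px _]. exact Px.
  + intros D1 HD1. destruct (inf_dense Y Y' inf D1 HD1) as [i Hi].
    destruct (list_code _ i Hi) as [enc Henc].
    destruct (Hiota D1 HD1 (i 0%nat)) as [iota Hio].
    destruct (D2_card X Y Y' f x0 D' _ iota Hio enc Henc) as [g Hg].
    exists (D2 X Y Y' f x0 D'). split; [exact (D2_dense X Y Y' f x0 D')|].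
    exists g. exact Hg.
Qed.
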